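(* Let $S=\{\rho_1=0<\rho_2<\cdots\}$ be an Arf numerical semigroup with conductor $c=\rho_r$. If $j$ is a positive integer with $j<c+r$, then $\beta(\rho_j)\le r-1$ and $\#A[\rho_j]\le 2r-2<\#A[\rho_{c+r}]$.
   Context: A numerical semigroup is a submonoid $S$ of $(\mathbb{N}_0,+)$ with finite complement, with elements listed increasingly. $S$ is Arf if $\rho_i+\rho_j-\rho_k\in S$ for all positive integers $i\ge j\ge k$. The conductor $c$ is the smallest integer such that all integers $\ge c$ lie in $S$, with $c=\rho_r$. For $\rho\in S$: $A[\rho]=\{p\in S:\ \rho-p\in S\}$ and $\beta(\rho)=\max\{j\ge1:\ \rho_1,\dots,\rho_j\in A[\rho]\ \text{and}\ 2\rho_j\le\rho\}$. *)

(* Defs.v *)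
From mathcomp Require Import all_boot.
Set Implicit Arguments. Unset Strict Implicit. Unset Printing Implicit Defensive.

Definition numerical_semigroup (S : pred nat) : Prop :=
  [/\ S 0, (forall a b, S a -> S b -> S (a + b)) &
      exists N, forall n, N <= n -> S n].

(* rho is the increasing enumeration rho_1 < rho_2 < ... of S
   (indices are positive integers; rho 0 is irrelevant). *)
Definition enumerates (S : pred nat) (rho : nat -> nat) : Prop :=
  (forall i j, 0 < i -> i < j -> rho i < rho j) /\
  (forall x, S x <-> exists2 i, 0 < i & rho i = x).

Definition Arf (S : pred nat) (rho : nat -> nat) : Prop :=
  forall i j k, 0 < k -> k <= j -> j <= i -> S (rho i + rho j - rho k).

Definition is_conductor (S : pred nat) (c : nat) : Prop :=
  (forall n, c <= n -> S n) /\
  (forall m, (forall n, m <= n -> S n) -> c <= m).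

(* membership in A[x] = { p in S : x - p in S } (p <= x is implicit). *)
Definition inA (S : pred nat) (x p : nat) : bool := [&& S p, p <= x & S (x - p)].

(* A[x] as a duplicate-free list; its cardinality is size (Aset S x). *)
Definition Aset (S : pred nat) (x : nat) : seq nat :=
  [seq p <- iota 0 x.+1 | inA S x p].

Definition beta_cond (S : pred nat) (rho : nat -> nat) (x j : nat) : bool :=
  all (fun i => inA S x (rho i)) (iota 1 j) && (2 * rho j <= x).

(* beta(x) = max{ j >= 1 : beta_cond j }; any such j satisfies j <= x + 1
   since the rho_i are distinct naturals, so the range 1 <= j < x+2 suffices. *)
Definition beta (S : pred nat) (rho : nat -> nat) (x : nat) : nat :=
  \max_(1 <= j < x.+2 | beta_cond S rho x j) j.

(* Main.v *)
Require Import Defs.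
From mathcomp Require Import all_boot.
From mathcomp Require Import zify.

Section Aux.
Variables (S : pred nat) (rho : nat -> nat).
Hypothesis hinc : forall i j, 0 < i -> i < j -> rho i < rho j.

Lemma rho_le i k : 0 < i -> i <= k -> rho i <= rho k.
Proof.
move=> hi; rewrite leq_eqVlt => /orP[/eqP->//|hk].
by apply: ltnW; apply: hinc.
Qed.

Lemma rho_lt_inv i k : 0 < i -> 0 < k -> rho i < rho k -> i < k.
Proof.
move=> hi hk h; rewrite ltnNge; apply/negP => hki.
have := @rho_le k i hk hki; lia.
Qed.
End Aux.

Theorem mainTheorem8 (S : pred nat) (rho : nat -> nat) (c r : nat)
  (hS : numerical_semigroup S) (hrho : enumerates S rho) (hArf : Arf S rho)
  (hc : is_conductor S c) (hr0 : 0 < r) (hr : rho r = c)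
  (j : nat) (hj0 : 0 < j) (hj : j < c + r) :
  beta S rho (rho j) <= r - 1 /\
  size (Aset S (rho j)) <= 2 * r - 2 /\
  2 * r - 2 < size (Aset S (rho (c + r))).
Proof.
case: hrho => hinc hmem.
have hSc : forall n, c <= n -> S n by case: hc.
have shift : forall k, rho (r + k) = c + k.
  elim=> [|k IH]; first by rewrite !addn0.
  have [i hi0 hi] := (hmem (c + k.+1)).1 (hSc _ (leq_addr _ _)).
  have h1 : rho (r + k) < rho (r + k.+1) by apply: hinc; lia.
  have h2 : r + k < i by apply: (@rho_lt_inv rho hinc); [lia|lia|rewrite hi IH; lia].
  have := @rho_le rho hinc _ _ (_ : 0 < r + k.+1) (_ : r + k.+1 <= i); lia.
have h2c : rho (c + r) = 2 * c by rewrite addnC shift; lia.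
have hjlt : rho j < 2 * c by rewrite -h2c; apply: hinc.
set L := [seq p <- iota 0 c | S p].
have memL : forall p, (p \in L) = (p < c) && S p.
  by move=> p; rewrite mem_filter mem_iota /= andbC.
have sizeL : size L = r - 1.
  have pe : perm_eq L (map rho (iota 1 (r - 1))).
    apply: uniq_perm.
    - by apply: filter_uniq; apply: iota_uniq.
    - rewrite map_inj_in_uniq ?iota_uniq // => a b.
      rewrite !mem_iota => ha hb hab.
      case: (ltngtP a b) => // hlt.
      + have ha0 : 0 < a by lia.
        by have := hinc _ _ ha0 hlt; rewrite hab ltnn.
      + have hb0 : 0 < b by lia.
        by have := hinc _ _ hb0 hlt; rewrite hab ltnn.
    - move=> p; rewrite memL; apply/andP/mapP.
      + case=> hp /hmem [i hi0 hi]; exists i => //.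
        rewrite mem_iota; apply/andP; split => //.
        have : i < r by apply: (@rho_lt_inv rho hinc) => //; rewrite hi hr.
        lia.
      + case=> i; rewrite mem_iota => /andP [hi1 hi2] ->; split.
        * rewrite -hr; apply: hinc; lia.
        * by apply/hmem; exists i.
  by rewrite (perm_size pe) size_map size_iota.
split.
  rewrite /beta; apply: (big_ind (fun v => v <= r - 1)) => //.
  - by move=> a b ha hb; rewrite geq_max ha hb.
  - move=> i /andP [_ hb].
    case: i hb => [|i] hb; first by [].
    have : i.+1 < r by apply: (@rho_lt_inv rho hinc) => //; lia.
    lia.
have hSsub : forall p, S p -> p < c -> p \in L by move=> p hp hpc; rewrite memL hpc hp.
split.
  set x := rho j.
  set A := Aset S x.
  have hA : forall p, p \in A -> [/\ S p, p <= x & S (x - p)].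
    by move=> p; rewrite mem_filter /inA => /andP [/and3P [h1 h2 h3] _].
  have uA : uniq A by apply: filter_uniq; apply: iota_uniq.
  rewrite -(count_predC (fun p => p < c) A) -!size_filter.
  have e1 : size [seq p <- A | p < c] <= r - 1.
    rewrite -sizeL; apply: uniq_leq_size; first by apply: filter_uniq.
    move=> p; rewrite mem_filter => /andP [hpc /hA [h1 _ _]].
    by rewrite memL hpc h1.
  have e2 : size [seq p <- A | predC (fun p => p < c) p] <= r - 1.
    rewrite -sizeL -(size_map (fun p => x - p)); apply: uniq_leq_size.
    - rewrite map_inj_in_uniq; first by apply: filter_uniq.
      move=> a b; rewrite mem_filter => /andP [_ /hA [_ ha _]].
      rewrite mem_filter => /andP [_ /hA [_ hb _]].
      lia.
    - move=> q /mapP [p]; rewrite mem_filter => /andP [hpc /hA [_ h2 h3]] ->.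
      rewrite memL h3 andbT; move: hpc; rewrite /= -leqNgt; lia.
  by apply: leq_trans (leq_add e1 e2) _; lia.
rewrite h2c.
set T := L ++ c :: [seq 2 * c - p | p <- L].
have uT : uniq T.
  have hmL : forall q, q \in [seq 2 * c - p | p <- L] -> c < q.
    move=> q /mapP [p]; rewrite memL => /andP [hp _] ->; lia.
  have ncL : c \notin L by rewrite memL ltnn.
  have nh : ~~ has (mem L) [seq 2 * c - p | p <- L].
    apply/hasPn => q hq; rewrite /= memL; apply/negP => /andP [hl _].
    have := hmL q hq; lia.
  have nc : c \notin [seq 2 * c - p | p <- L].
    by apply/negP => /hmL; rewrite ltnn.
  have um : uniq [seq 2 * c - p | p <- L].
    rewrite map_inj_in_uniq; first by apply: filter_uniq; apply: iota_uniq.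
    move=> a b; rewrite !memL => /andP [ha _] /andP [hb _]; lia.
  rewrite cat_uniq /= filter_uniq ?iota_uniq //= negb_or ncL nh nc um //.
have : size T <= size (Aset S (2 * c)).
  apply: uniq_leq_size => // q.
  rewrite mem_filter mem_iota /inA => hq.
  rewrite add0n; move: hq; rewrite mem_cat inE => /or3P [hq|/eqP ->|/mapP [p hp ->]].
  - move: hq; rewrite memL => /andP [hpc hp].
    rewrite hp /=; rewrite hSc; [|lia]; lia.
  - rewrite hSc ?hSc /=; lia.
  - move: hp; rewrite memL => /andP [hpc hp].
    rewrite hSc /=; [|lia].
    rewrite (_ : 2 * c - (2 * c - p) = p); [|lia].
    rewrite hp /=; lia.
rewrite size_cat /= size_map sizeL; lia.
Qed.
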